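(* Let $(A,\mathit{Con},\Delta)$ be a normal default structure (with trivial entailment) and let $\mid\!\sim_A$ be its skeptical nonmonotonic consequence relation. Then $\mid\!\sim_A$ satisfies cautious cut: for all finite sets $X,T,Y\in\mathit{Con}$ with $X\cup T\in\mathit{Con}$, if $X\mid\!\sim_A T$ and $X\cup T\mid\!\sim_A Y$, then $X\mid\!\sim_A Y$.
   Context: A normal default structure (with trivial entailment) is a triple $(A,\mathit{Con},\Delta)$ where $A$ is a set of tokens; $\mathit{Con}$ is a set of finite subsets of $A$ such that $\emptyset\in\mathit{Con}$, $X\subseteq Y\in\mathit{Con}$ implies $X\in\mathit{Con}$, and $\{a\}\in\mathit{Con}$ for every $a\in A$; an arbitrary subset of $A$ is called consistent (written $X\in\mathit{Con}$) if all its finite subsets lie in $\mathit{Con}$; and $\Delta$ is a set of normal defaults, each written $\frac{X:a}{a}$ with $X\in\mathit{Con}$ finite and $a\in A$. For a consistent set $x\subseteq A$ and any $S\subseteq A$, define $\phi(x,S,0)=x$ and $\phi(x,S,i+1)=\phi(x,S,i)\cup\{a\mid \frac{X:a}{a}\in\Delta,\ X\subseteq\phi(x,S,i),\ \{a\}\cup S\in\mathit{Con}\}$, and $\Phi(x,S)=\bigcup_{i\ge0}\phi(x,S,i)$. A set $y$ is an extension of $x$ if $\Phi(x,y)=y$. The skeptical consequence relation is defined for $X\in\mathit{Con}$ and $a\in A$ by $X\mid\!\sim_A a$ iff $a$ belongs to every extension of $X$; for a finite set $Y$, $X\mid\!\sim_A Y$ means $X\mid\!\sim_A b$ for every $b\in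 Y$. *)

(* Defs.v *)
From Stdlib Require Import List.
Import ListNotations.

(* A normal default structure with trivial entailment.
   Tokens: an arbitrary type A.  Finite subsets of A are represented by lists
   (membership via In); arbitrary subsets by predicates A -> Prop. *)

Definition fsubset {A : Type} (X Y : list A) : Prop := forall a, In a X -> In a Y.

Record default_structure (A : Type) := DefaultStructure {
  Con : list A -> Prop;
  Delta : list A -> A -> Prop;                (* Delta X a  <=>  (X:a)/a is a default *)
  Con_nil : Con [];
  Con_down : forall X Y, fsubset X Y -> Con Y -> Con X;
  Con_single : forall a, Con [a];
  Delta_Con : forall X a, Delta X a -> Con X
}.
Arguments Con {A} d X.
Arguments Delta {A} d X a.

Definition ConSet {A : Type} (d : default_structure A) (x : A -> Prop) : Prop :=
  forall X : list A, (forall a, In a X -> x a) -> Con d X.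

Fixpoint phi {A : Type} (d : default_structure A) (x s : A -> Prop) (i : nat)
  : A -> Prop :=
  match i with
  | 0 => x
  | Datatypes.S j => fun a =>
      phi d x s j a \/
      exists X : list A, Delta d X a /\
        (forall b, In b X -> phi d x s j b) /\
        ConSet d (fun c => c = a \/ s c)
  end.

Definition Phi {A : Type} (d : default_structure A) (x s : A -> Prop) : A -> Prop :=
  fun a => exists i, phi d x s i a.

Definition extension {A : Type} (d : default_structure A) (x y : A -> Prop) : Prop :=
  forall a, Phi d x y a <-> y a.

Definition skept {A : Type} (d : default_structure A) (X : list A) (a : A) : Prop :=
  Con d X /\ forall y, extension d (fun b => In b X) y -> y a.

Definition skept_set {A : Type} (d : default_structure A) (X Y : list A) : Prop :=
  forall b, In b Y -> skept d X b.

(* Main.v *)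
Require Import Defs.
From Stdlib Require Import List Lia.
Import ListNotations.

Lemma phi_S {A} (d : default_structure A) x s i a : phi d x s i a -> phi d x s (S i) a.
Proof. intro H; simpl; now left. Qed.

Lemma phi_le {A} (d : default_structure A) x s i j a : i <= j -> phi d x s i a -> phi d x s j a.
Proof. induction 1; auto. intro Hp; apply phi_S; auto. Qed.

Lemma phi_base {A} (d : default_structure A) x x' s :
  (forall a, x a -> x' a) -> forall i a, phi d x s i a -> phi d x' s i a.
Proof.
  intros Hx i; induction i; simpl; intros a H; auto.
  destruct H as [H|[X0 [H1 [H2 H3]]]]; [left; auto|right; exists X0; repeat split; auto].
Qed.

Lemma phi_list {A} (d : default_structure A) x s (L : list A) :
  (forall b, In b L -> exists i, phi d x s i b) -> exists n, forall b, In b L -> phi d x s n b.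
Proof.
  induction L as [|c L IH]; intros H.
  - exists 0; intros b [].
  - destruct (H c (or_introl eq_refl)) as [i Hi].
    destruct IH as [n Hn]. { intros b Hb; apply H; right; auto. }
    exists (i + n); intros b [<-|Hb].
    + apply (phi_le d x s i); [lia|auto].
    + apply (phi_le d x s n); [lia|auto].
Qed.

Theorem theorem3 (A : Type) (d : default_structure A) (X T Y : list A) :
  Con d X -> Con d T -> Con d Y -> Con d (X ++ T) ->
  skept_set d X T -> skept_set d (X ++ T) Y -> skept_set d X Y.
Proof.
  intros HX HT HY HXT HsT HsY b Hb.
  split; auto.
  intros y Hy.
  destruct (HsY b Hb) as [_ Hyb]. apply Hyb.
  assert (Ty : forall t, In t T -> y t).
  { intros t Ht. destruct (HsT t Ht) as [_ H]. apply H; auto. }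
  assert (Xy : forall t, In t X -> y t).
  { intros t Ht. apply Hy. exists 0. exact Ht. }
  intro a; split.
  - intros [i Hi]. revert a Hi. induction i; simpl; intros a Hi.
    + apply in_app_or in Hi; destruct Hi; auto.
    + destruct Hi as [Hi|[X0 [H1 [H2 H3]]]]; auto.
      assert (HX0 : forall c, In c X0 -> exists j, phi d (fun b => In b X) y j c).
      { intros c Hc. apply Hy. auto. }
      destruct (phi_list d _ _ X0 HX0) as [n Hn].
      apply Hy. exists (S n). simpl. right. exists X0; auto.
  - intro Ha. apply Hy in Ha. destruct Ha as [i Hi]. exists i.
    revert Hi. apply phi_base. intros c Hc. apply in_or_app; auto.
Qed.
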